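(* Let $(\mathcal{L},[\cdot,\cdot,\cdot]_{\mathcal{L}},\mathbf{1})$ be a central (right) $3$-Leibniz algebra over a field $\mathbb{K}$. Then $(\mathcal{L}\otimes\mathcal{L},\{\cdot,\cdot\},\mathbf{1}\otimes\mathbf{1})$ is a central Leibniz algebra, where $\{x_1\otimes x_2,y_1\otimes y_2\}=[x_1,y_1,y_2]_{\mathcal{L}}\otimes x_2+x_1\otimes[x_2,y_1,y_2]_{\mathcal{L}}$. Consequently, the linear map $R$ on $(\mathcal{L}\otimes\mathcal{L})^{\otimes2}$ given by $R((x_1\otimes x_2)\otimes(y_1\otimes y_2))=(y_1\otimes y_2)\otimes(x_1\otimes x_2)+(\mathbf{1}\otimes\mathbf{1})\otimes([x_1,y_1,y_2]_{\mathcal{L}}\otimes x_2)+(\mathbf{1}\otimes\mathbf{1})\otimes(x_1\otimes[x_2,y_1,y_2]_{\mathcal{L}})$ is a solution of the Yang-Baxter equation.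
   Context: A (right) $3$-Leibniz algebra is a vector space $\mathcal{L}$ with a trilinear map $[\cdot,\cdot,\cdot]_{\mathcal{L}}$ such that $[[x_1,x_2,x_3]_{\mathcal{L}},y_1,y_2]_{\mathcal{L}}=[[x_1,y_1,y_2]_{\mathcal{L}},x_2,x_3]_{\mathcal{L}}+[x_1,[x_2,y_1,y_2]_{\mathcal{L}},x_3]_{\mathcal{L}}+[x_1,x_2,[x_3,y_1,y_2]_{\mathcal{L}}]_{\mathcal{L}}$. It is central with central element $\mathbf{1}\in\mathcal{L}$ if $[\mathbf{1},x,y]_{\mathcal{L}}=[x,\mathbf{1},y]_{\mathcal{L}}=[x,y,\mathbf{1}]_{\mathcal{L}}=0$ for all $x,y$. A central Leibniz algebra is a Leibniz algebra ($[[x,y],z]=[[x,z],y]+[x,[y,z]]$) with an element $\mathbf{1}$ such that $[\mathbf{1},x]=0=[x,\mathbf{1}]$ for all $x$. A solution of the Yang-Baxter equation on $V$ is an invertible linear $R:V\otimes V\to V\otimes V$ with $(R\otimes\mathrm{Id})(\mathrm{Id}\otimes R)(R\otimes\mathrm{Id})=(\mathrm{Id}\otimes R)(R\otimes\mathrm{Id})(\mathrm{Id}\otimes R)$. *)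

(* Defs.v *)
From HB Require Import structures.
From mathcomp Require Import all_boot all_algebra.
Set Implicit Arguments. Unset Strict Implicit. Unset Printing Implicit Defensive.
Import GRing.Theory.
Local Open Scope ring_scope.

(* Tensor products of arbitrary
   (possibly infinite-dimensional) vector spaces are given by their universal
   property, since MathComp has no built-in tensor product. *)

Definition lin (K : fieldType) (U W : lmodType K) (f : U -> W) : Prop :=
  forall (a : K) (x y : U), f (a *: x + y) = a *: f x + f y.

Definition bilin (K : fieldType) (U V W : lmodType K) (f : U -> V -> W) : Prop :=
  (forall v, lin (fun u => f u v)) /\ (forall u, lin (f u)).

Definition trilin (K : fieldType) (U V X W : lmodType K)
  (f : U -> V -> X -> W) : Prop :=
  [/\ (forall v x, lin (fun u => f u v x)),
      (forall u x, lin (fun v => f u v x)) &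
      (forall u v, lin (f u v))].

Record tensor2 (K : fieldType) (U V : lmodType K) := Tensor2 {
  t2_sort :> lmodType K;
  t2 : U -> V -> t2_sort;
  t2_bilin : bilin t2;
  t2_univ : forall (W : lmodType K) (f : U -> V -> W), bilin f ->
    exists g : t2_sort -> W, lin g /\ forall u v, g (t2 u v) = f u v;
  t2_uniq : forall (W : lmodType K) (g1 g2 : t2_sort -> W), lin g1 -> lin g2 ->
    (forall u v, g1 (t2 u v) = g2 (t2 u v)) -> g1 =1 g2 }.

Record tensor3 (K : fieldType) (U V X : lmodType K) := Tensor3 {
  t3_sort :> lmodType K;
  t3 : U -> V -> X -> t3_sort;
  t3_trilin : trilin t3;
  t3_univ : forall (W : lmodType K) (f : U -> V -> X -> W), trilin f ->
    exists g : t3_sort -> W, lin g /\ forall u v x, g (t3 u v x) = f u v x;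
  t3_uniq : forall (W : lmodType K) (g1 g2 : t3_sort -> W), lin g1 -> lin g2 ->
    (forall u v x, g1 (t3 u v x) = g2 (t3 u v x)) -> g1 =1 g2 }.

Definition central_3Leibniz (K : fieldType) (L : lmodType K)
  (br : L -> L -> L -> L) (one : L) : Prop :=
  [/\ trilin br,
      (forall x1 x2 x3 y1 y2 : L,
        br (br x1 x2 x3) y1 y2 =
        br (br x1 y1 y2) x2 x3 + br x1 (br x2 y1 y2) x3 + br x1 x2 (br x3 y1 y2)) &
      (forall x y : L, [/\ br one x y = 0, br x one y = 0 & br x y one = 0])].

Definition central_Leibniz (K : fieldType) (A : lmodType K)
  (br : A -> A -> A) (one : A) : Prop :=
  [/\ bilin br,
      (forall x y z : A, br (br x y) z = br (br x z) y + br x (br y z)) &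
      (forall x : A, br one x = 0 /\ br x one = 0)].

(* Here R(x)Id and Id(x)R are the linear maps R12, R23 with
   R12 (a(x)b(x)c) = m3 (R (a(x)b)) c and R23 (a(x)b(x)c) = m1 a (R (b(x)c)),
   where m3 : (V(x)V) x V -> V(x)V(x)V and m1 : V x (V(x)V) -> V(x)V(x)V are the
   canonical bilinear identifications. *)
Definition YBE_solution (K : fieldType) (V : lmodType K)
  (VV : tensor2 V V) (VVV : tensor3 V V V) (R : VV -> VV) : Prop :=
  [/\ lin R, bijective R &
    forall (m1 : V -> VV -> VVV) (m3 : VV -> V -> VVV) (R12 R23 : VVV -> VVV),
      bilin m1 -> bilin m3 ->
      (forall a b c, m1 a (t2 VV b c) = t3 VVV a b c) ->
      (forall a b c, m3 (t2 VV a b) c = t3 VVV a b c) ->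
      lin R12 -> lin R23 ->
      (forall a b c, R12 (t3 VVV a b c) = m3 (R (t2 VV a b)) c) ->
      (forall a b c, R23 (t3 VVV a b c) = m1 a (R (t2 VV b c))) ->
      forall w, R12 (R23 (R12 w)) = R23 (R12 (R23 w))].

(* Main.v *)
Require Import Defs.
From HB Require Import structures.
From mathcomp Require Import all_boot all_algebra.
From Stdlib Require Import ClassicalEpsilon.
Set Implicit Arguments. Unset Strict Implicit. Unset Printing Implicit Defensive.
Import GRing.Theory.
Local Open Scope ring_scope.

Lemma lin0 (K : fieldType) (U W : lmodType K) (f : U -> W) : lin f -> f 0 = 0.
Proof. move=> H; have := H (-1) 0 0; by rewrite scaler0 addr0 scaleN1r addNr. Qed.
Lemma linD (K : fieldType) (U W : lmodType K) (f : U -> W) : lin f ->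
  forall x y, f (x + y) = f x + f y.
Proof. by move=> H x y; have := H 1 x y; rewrite !scale1r. Qed.
Lemma linZ (K : fieldType) (U W : lmodType K) (f : U -> W) : lin f ->
  forall a x, f (a *: x) = a *: f x.
Proof. by move=> H a x; have := H a x 0; rewrite !addr0 (lin0 H) addr0. Qed.
Lemma linN (K : fieldType) (U W : lmodType K) (f : U -> W) : lin f ->
  forall x, f (- x) = - f x.
Proof. by move=> H x; rewrite -scaleN1r (linZ H) scaleN1r. Qed.
Lemma linB (K : fieldType) (U W : lmodType K) (f : U -> W) : lin f ->
  forall x y, f (x - y) = f x - f y.
Proof. by move=> H x y; rewrite (linD H) (linN H). Qed.
Lemma linAdd (K : fieldType) (U W : lmodType K) (f g : U -> W) : lin f -> lin g ->
  lin (fun x => f x + g x).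
Proof.
move=> Hf Hg a x y; rewrite Hf Hg scalerDr.
by rewrite addrACA.
Qed.
Lemma linOpp (K : fieldType) (U W : lmodType K) (f : U -> W) : lin f ->
  lin (fun x => - f x).
Proof. by move=> Hf a x y; rewrite Hf opprD scalerN. Qed.
Lemma linSub (K : fieldType) (U W : lmodType K) (f g : U -> W) : lin f -> lin g ->
  lin (fun x => f x - g x).
Proof. by move=> Hf Hg; apply: linAdd Hf (linOpp Hg). Qed.
Lemma linScale (K : fieldType) (U W : lmodType K) (f : U -> W) b : lin f ->
  lin (fun x => b *: f x).
Proof. by move=> Hf a x y; rewrite Hf scalerDr !scalerA mulrC. Qed.
Lemma linComp (K : fieldType) (U V W : lmodType K) (f : V -> W) (g : U -> V) :
  lin f -> lin g -> lin (fun x => f (g x)).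
Proof. by move=> Hf Hg a x y; rewrite Hg Hf. Qed.
Lemma linId (K : fieldType) (U : lmodType K) : lin (fun x : U => x).
Proof. by []. Qed.
Lemma linZero (K : fieldType) (U W : lmodType K) : lin (fun x : U => (0 : W)).
Proof. by move=> a x y; rewrite scaler0 addr0. Qed.

Lemma blDl (K : fieldType) (U V W : lmodType K) (f : U -> V -> W) (H : bilin f) : forall x y z, f (x + y) z = f x z + f y z.
Proof. by move=> x y z; exact: (linD (H.1 z)). Qed.
Lemma blDr (K : fieldType) (U V W : lmodType K) (f : U -> V -> W) (H : bilin f) : forall x y z, f z (x + y) = f z x + f z y.
Proof. by move=> x y z; exact: (linD (H.2 z)). Qed.
Lemma blZl (K : fieldType) (U V W : lmodType K) (f : U -> V -> W) (H : bilin f) : forall a x z, f (a *: x) z = a *: f x z.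
Proof. by move=> a x z; exact: (linZ (H.1 z)). Qed.
Lemma blZr (K : fieldType) (U V W : lmodType K) (f : U -> V -> W) (H : bilin f) : forall a x z, f z (a *: x) = a *: f z x.
Proof. by move=> a x z; exact: (linZ (H.2 z)). Qed.
Lemma bl0l (K : fieldType) (U V W : lmodType K) (f : U -> V -> W) (H : bilin f) : forall z, f 0 z = 0.
Proof. by move=> z; exact: (lin0 (H.1 z)). Qed.
Lemma bl0r (K : fieldType) (U V W : lmodType K) (f : U -> V -> W) (H : bilin f) : forall z, f z 0 = 0.
Proof. by move=> z; exact: (lin0 (H.2 z)). Qed.
Lemma blNl (K : fieldType) (U V W : lmodType K) (f : U -> V -> W) (H : bilin f) : forall x z, f (- x) z = - f x z.
Proof. by move=> x z; exact: (linN (H.1 z)). Qed.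
Lemma blNr (K : fieldType) (U V W : lmodType K) (f : U -> V -> W) (H : bilin f) : forall x z, f z (- x) = - f z x.
Proof. by move=> x z; exact: (linN (H.2 z)). Qed.
Lemma blLl (K : fieldType) (U V W : lmodType K) (f : U -> V -> W) (H : bilin f) :
  forall a x y z, f (a *: x + y) z = a *: f x z + f y z.
Proof. by move=> a x y z; exact: (H.1 z a x y). Qed.
Lemma blLr (K : fieldType) (U V W : lmodType K) (f : U -> V -> W) (H : bilin f) :
  forall a x y z, f z (a *: x + y) = a *: f z x + f z y.
Proof. by move=> a x y z; exact: (H.2 z a x y). Qed.
Lemma tri1D (K : fieldType) (U V X W : lmodType K) (f : U -> V -> X -> W) (H : trilin f) : forall x y p q, f (x + y) p q = f x p q + f y p q.
Proof. case: H => H1 H2 H3 x y p q; exact: (linD (H1 p q)). Qed.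
Lemma tri1Z (K : fieldType) (U V X W : lmodType K) (f : U -> V -> X -> W) (H : trilin f) : forall a x p q, f (a *: x) p q = a *: f x p q.
Proof. case: H => H1 H2 H3 a x p q; exact: (linZ (H1 p q)). Qed.
Lemma tri1N (K : fieldType) (U V X W : lmodType K) (f : U -> V -> X -> W) (H : trilin f) : forall x p q, f (- x) p q = - f x p q.
Proof. case: H => H1 H2 H3 x p q; exact: (linN (H1 p q)). Qed.
Lemma tri10 (K : fieldType) (U V X W : lmodType K) (f : U -> V -> X -> W) (H : trilin f) : forall  p q, f 0 p q = 0.
Proof. case: H => H1 H2 H3  p q; exact: (lin0 (H1 p q)). Qed.
Lemma tri1L (K : fieldType) (U V X W : lmodType K) (f : U -> V -> X -> W) (H : trilin f) : forall a x y p q, f (a *: x + y) p q = a *: f x p q + f y p q.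
Proof. case: H => H1 H2 H3 a x y p q; exact: (H1 p q a x y). Qed.
Lemma tri2D (K : fieldType) (U V X W : lmodType K) (f : U -> V -> X -> W) (H : trilin f) : forall x y p q, f p (x + y) q = f p x q + f p y q.
Proof. case: H => H1 H2 H3 x y p q; exact: (linD (H2 p q)). Qed.
Lemma tri2Z (K : fieldType) (U V X W : lmodType K) (f : U -> V -> X -> W) (H : trilin f) : forall a x p q, f p (a *: x) q = a *: f p x q.
Proof. case: H => H1 H2 H3 a x p q; exact: (linZ (H2 p q)). Qed.
Lemma tri2N (K : fieldType) (U V X W : lmodType K) (f : U -> V -> X -> W) (H : trilin f) : forall x p q, f p (- x) q = - f p x q.
Proof. case: H => H1 H2 H3 x p q; exact: (linN (H2 p q)). Qed.
Lemma tri20 (K : fieldType) (U V X W : lmodType K) (f : U -> V -> X -> W) (H : trilin f) : forall  p q, f p 0 q = 0.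
Proof. case: H => H1 H2 H3  p q; exact: (lin0 (H2 p q)). Qed.
Lemma tri2L (K : fieldType) (U V X W : lmodType K) (f : U -> V -> X -> W) (H : trilin f) : forall a x y p q, f p (a *: x + y) q = a *: f p x q + f p y q.
Proof. case: H => H1 H2 H3 a x y p q; exact: (H2 p q a x y). Qed.
Lemma tri3D (K : fieldType) (U V X W : lmodType K) (f : U -> V -> X -> W) (H : trilin f) : forall x y p q, f p q (x + y) = f p q x + f p q y.
Proof. case: H => H1 H2 H3 x y p q; exact: (linD (H3 p q)). Qed.
Lemma tri3Z (K : fieldType) (U V X W : lmodType K) (f : U -> V -> X -> W) (H : trilin f) : forall a x p q, f p q (a *: x) = a *: f p q x.
Proof. case: H => H1 H2 H3 a x p q; exact: (linZ (H3 p q)). Qed.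
Lemma tri3N (K : fieldType) (U V X W : lmodType K) (f : U -> V -> X -> W) (H : trilin f) : forall x p q, f p q (- x) = - f p q x.
Proof. case: H => H1 H2 H3 x p q; exact: (linN (H3 p q)). Qed.
Lemma tri30 (K : fieldType) (U V X W : lmodType K) (f : U -> V -> X -> W) (H : trilin f) : forall  p q, f p q 0 = 0.
Proof. case: H => H1 H2 H3  p q; exact: (lin0 (H3 p q)). Qed.
Lemma tri3L (K : fieldType) (U V X W : lmodType K) (f : U -> V -> X -> W) (H : trilin f) : forall a x y p q, f p q (a *: x + y) = a *: f p q x + f p q y.
Proof. case: H => H1 H2 H3 a x y p q; exact: (H3 p q a x y). Qed.

Lemma ext2 (K : fieldType) (U V W : lmodType K) (T : tensor2 U V) (P Q : T -> T -> W) :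
  bilin P -> bilin Q ->
  (forall x1 x2 y1 y2, P (t2 T x1 x2) (t2 T y1 y2) = Q (t2 T x1 x2) (t2 T y1 y2)) ->
  forall x y, P x y = Q x y.
Proof.
move=> HP HQ E x y.
have Ey : forall u v, P x (t2 T u v) = Q x (t2 T u v).
  move=> u v; move: x; apply: t2_uniq; [exact: HP.1|exact: HQ.1|move=> ??; exact: E].
move: y; apply: t2_uniq; [exact: HP.2|exact: HQ.2|exact: Ey].
Qed.

Lemma ext3 (K : fieldType) (U V W : lmodType K) (T : tensor2 U V) (P Q : T -> T -> T -> W) :
  trilin P -> trilin Q ->
  (forall x1 x2 y1 y2 z1 z2, P (t2 T x1 x2) (t2 T y1 y2) (t2 T z1 z2)
        = Q (t2 T x1 x2) (t2 T y1 y2) (t2 T z1 z2)) ->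
  forall x y z, P x y z = Q x y z.
Proof.
case=> HP1 HP2 HP3 [HQ1 HQ2 HQ3] E x y z.
have E1 : forall y1 y2 z1 z2, P x (t2 T y1 y2) (t2 T z1 z2) = Q x (t2 T y1 y2) (t2 T z1 z2).
  move=> y1 y2 z1 z2; move: x; apply: t2_uniq; [exact: HP1|exact: HQ1|move=> ??; exact: E].
have E2 : forall z1 z2, P x y (t2 T z1 z2) = Q x y (t2 T z1 z2).
  move=> z1 z2; move: y; apply: t2_uniq; [exact: HP2|exact: HQ2|move=> ??; exact: E1].
move: z; apply: t2_uniq; [exact: HP3|exact: HQ3|move=> ??; exact: E2].
Qed.

Lemma choice1 (A B : Type) (P : A -> B -> Prop) :
  (forall a, exists b, P a b) -> exists f : A -> B, forall a, P a (f a).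
Proof.
move=> H; exists (fun a => proj1_sig (constructive_indefinite_description _ (H a))).
by move=> a; exact: proj2_sig.
Qed.
Lemma choice2 (A B C : Type) (P : A -> B -> C -> Prop) :
  (forall a b, exists c, P a b c) -> exists f : A -> B -> C, forall a b, P a b (f a b).
Proof.
move=> H; have [g Hg] := @choice1 _ _ (fun (ab : A * B) c => P ab.1 ab.2 c) (fun ab => H ab.1 ab.2).
by exists (fun a b => g (a, b)) => a b; exact: (Hg (a, b)).
Qed.

Lemma part1 (K : fieldType) (L : lmodType K) (br : L -> L -> L -> L) (TL : tensor2 L L) :
  trilin br ->
  exists B : TL -> TL -> TL, bilin B /\
    forall x1 x2 y1 y2 : L,
      B (t2 TL x1 x2) (t2 TL y1 y2) = t2 TL (br x1 y1 y2) x2 + t2 TL x1 (br x2 y1 y2).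
Proof.
move=> Hbr; have Ht := t2_bilin TL.
have hD : forall y1 y2, exists g : TL -> TL, lin g /\ forall x1 x2,
    g (t2 TL x1 x2) = t2 TL (br x1 y1 y2) x2 + t2 TL x1 (br x2 y1 y2).
  move=> y1 y2; apply: t2_univ; split => [v|u] a x y /=.
    by rewrite (tri1L Hbr) !(blLl Ht) scalerDr addrACA.
  by rewrite (tri1L Hbr) !(blLr Ht) scalerDr addrACA.
have [D HD] := choice2 hD.
have linD' y1 y2 := (HD y1 y2).1.
have hE : forall u : TL, exists g : TL -> TL, lin g /\ forall y1 y2,
    g (t2 TL y1 y2) = D y1 y2 u.
  move=> u; apply: t2_univ; split => [v|w] a x y /=.
    suff: D (a *: x + y) v =1 (fun u => a *: D x v u + D y v u) by apply.
    apply: t2_uniq => //; first by apply: linAdd => //; apply: linScale.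
    move=> x1 x2; rewrite !(HD _ _).2 (tri2L Hbr) (tri2L Hbr) !(blLl Ht) !(blLr Ht).
    by rewrite scalerDr addrACA.
  suff: D w (a *: x + y) =1 (fun u => a *: D w x u + D w y u) by apply.
  apply: t2_uniq => //; first by apply: linAdd => //; apply: linScale.
  move=> x1 x2; rewrite !(HD _ _).2 (tri3L Hbr) (tri3L Hbr) !(blLl Ht) !(blLr Ht).
  by rewrite scalerDr addrACA.
have [E HE] := choice1 hE.
exists E; split; last by move=> x1 x2 y1 y2; rewrite (HE _).2 (HD _ _).2.
split => [v|u]; last exact: (HE u).1.
move=> a x y; move: v.
suff: E (a *: x + y) =1 (fun v => a *: E x v + E y v) by [].
apply: t2_uniq; first exact: (HE _).1.
  by apply: linAdd; [apply: linScale; exact: (HE _).1 | exact: (HE _).1].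
by move=> y1 y2; rewrite !(HE _).2 (HD _ _).1.
Qed.

Lemma part2 (K : fieldType) (L : lmodType K) (br : L -> L -> L -> L) (one : L)
  (TL : tensor2 L L) (B : TL -> TL -> TL) :
  central_3Leibniz br one -> bilin B ->
  (forall x1 x2 y1 y2 : L,
      B (t2 TL x1 x2) (t2 TL y1 y2) = t2 TL (br x1 y1 y2) x2 + t2 TL x1 (br x2 y1 y2)) ->
  central_Leibniz B (t2 TL one one).
Proof.
case=> Hbr Hlb Hc HB HBp; have Ht := t2_bilin TL.
split => //.
  apply: (@ext3 _ _ _ _ TL (fun x y z => B (B x y) z) (fun x y z => B (B x z) y + B x (B y z))).
  - split => [v x|u x|u v].
    + exact: (linComp (HB.1 x) (HB.1 v)).
    + exact: (linComp (HB.1 x) (HB.2 u)).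
    + exact: (HB.2 _).
  - split => [v x|u x|u v].
    + apply: linAdd; [exact: (linComp (HB.1 v) (HB.1 x))| exact: (HB.1 _)].
    + apply: linAdd; [exact: (HB.2 _)| exact: (linComp (HB.2 u) (HB.1 x))].
    + apply: linAdd; [exact: (linComp (HB.1 v) (HB.2 u))| exact: (linComp (HB.2 u) (HB.2 v))].
  move=> x1 x2 y1 y2 z1 z2 /=.
  rewrite !HBp !(blDl HB) !(blDr HB) !HBp (Hlb x1) (Hlb x2) !(blDl Ht) !(blDr Ht).
  rewrite ?(tri2D Hbr) ?(tri3D Hbr) ?(blDl Ht) ?(blDr Ht).
  by rewrite !addrA [LHS](ACl (1*5*4*6*2*7*3*8)%AC).
move=> x; split.
  move: x; suff: B (t2 TL one one) =1 (fun _ => 0) by [].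
  apply: t2_uniq; [exact: (HB.2 _)|exact: linZero|].
  by move=> u v; rewrite HBp; case: (Hc u v) => -> _ _; rewrite (bl0l Ht) (bl0r Ht) addr0.
move: x; suff: (fun x => B x (t2 TL one one)) =1 (fun _ => 0) by [].
apply: t2_uniq; [exact: (HB.1 _)|exact: linZero|].
by move=> u v /=; rewrite HBp; case: (Hc u one) => _ _ ->; case: (Hc v one) => _ _ ->; rewrite (bl0l Ht) (bl0r Ht) addr0.
Qed.

Lemma part3 (K : fieldType) (L : lmodType K) (br : L -> L -> L -> L) (one : L)
  (TL : tensor2 L L) (TTL : tensor2 TL TL) (B : TL -> TL -> TL) :
  bilin B ->
  (forall x1 x2 y1 y2 : L,
      B (t2 TL x1 x2) (t2 TL y1 y2) = t2 TL (br x1 y1 y2) x2 + t2 TL x1 (br x2 y1 y2)) ->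
  exists R : TTL -> TTL, lin R /\
         forall x1 x2 y1 y2 : L,
           R (t2 TTL (t2 TL x1 x2) (t2 TL y1 y2)) =
           t2 TTL (t2 TL y1 y2) (t2 TL x1 x2)
           + t2 TTL (t2 TL one one) (t2 TL (br x1 y1 y2) x2)
           + t2 TTL (t2 TL one one) (t2 TL x1 (br x2 y1 y2)).
Proof.
move=> HB HBp; have Htt := t2_bilin TTL.
have hb : bilin (fun U V => t2 TTL V U + t2 TTL (t2 TL one one) (B U V)).
  split => [v|u].
    exact: (linAdd (Htt.2 v) (linComp (Htt.2 _) (HB.1 v))).
  exact: (linAdd (Htt.1 u) (linComp (Htt.2 _) (HB.2 u))).
have [R [HR HRp]] := @t2_univ _ _ _ TTL TTL _ hb.
exists R; split => // x1 x2 y1 y2.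
by rewrite HRp HBp (blDr Htt) addrA.
Qed.

Lemma part4 (K : fieldType) (L : lmodType K) (br : L -> L -> L -> L) (one : L)
  (TL : tensor2 L L) (TTL : tensor2 TL TL) (T3 : tensor3 TL TL TL) (B : TL -> TL -> TL)
  (R : TTL -> TTL) :
  central_Leibniz B (t2 TL one one) ->
  (forall x1 x2 y1 y2 : L,
      B (t2 TL x1 x2) (t2 TL y1 y2) = t2 TL (br x1 y1 y2) x2 + t2 TL x1 (br x2 y1 y2)) ->
  lin R ->
  (forall x1 x2 y1 y2 : L,
           R (t2 TTL (t2 TL x1 x2) (t2 TL y1 y2)) =
           t2 TTL (t2 TL y1 y2) (t2 TL x1 x2)
           + t2 TTL (t2 TL one one) (t2 TL (br x1 y1 y2) x2)
           + t2 TTL (t2 TL one one) (t2 TL x1 (br x2 y1 y2))) ->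
  YBE_solution T3 R.
Proof.
set e := t2 TL one one.
case=> HB Hlb Hc HBp HR HRp; have Htt := t2_bilin TTL.
have HRg : forall U V, R (t2 TTL U V) = t2 TTL V U + t2 TTL e (B U V).
  apply: (@ext2 _ _ _ _ TL (fun U V => R (t2 TTL U V))
            (fun U V => t2 TTL V U + t2 TTL e (B U V))).
  - split => [v|u]; [exact: (linComp HR (Htt.1 v))|exact: (linComp HR (Htt.2 u))].
  - split => [v|u].
      exact: (linAdd (Htt.2 v) (linComp (Htt.2 _) (HB.1 v))).
    exact: (linAdd (Htt.1 u) (linComp (Htt.2 _) (HB.2 u))).
  by move=> x1 x2 y1 y2 /=; rewrite HRp HBp (blDr Htt) addrA.
split => //.
  have hb : bilin (fun U V => t2 TTL V U - t2 TTL (B V U) e).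
    split => [v|u].
      exact: (linSub (Htt.2 v) (linComp (Htt.1 _) (HB.2 v))).
    exact: (linSub (Htt.1 u) (linComp (Htt.1 _) (HB.1 u))).
  have [S [HS HSp]] := @t2_univ _ _ _ TTL TTL _ hb.
  exists S.
    suff: (fun w => S (R w)) =1 id by [].
    apply: t2_uniq; [exact: linComp|exact: linId|].
    move=> U V /=; rewrite HRg (linD HS) !HSp.
    by rewrite (Hc _).2 (bl0l Htt) subr0 subrK.
  suff: (fun w => R (S w)) =1 id by [].
  apply: t2_uniq; [exact: linComp|exact: linId|].
  move=> U V /=; rewrite HSp (linB HR) !HRg.
  by rewrite (Hc _).2 (bl0r Htt) addr0 addrK.
move=> m1 m3 R12 R23 Hm1 Hm3 E1 E3 L12 L23 E12 E23 w; move: w.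
suff: (fun w => R12 (R23 (R12 w))) =1 (fun w => R23 (R12 (R23 w))) by [].
apply: t3_uniq; [do 2 apply: linComp => //|do 2 apply: linComp => //|].
move=> a b c /=.
do ![rewrite (linD L12) | rewrite (linD L23) | rewrite E12 | rewrite E23 | rewrite HRg
    | rewrite (blDl Hm3) | rewrite (blDr Hm1) | rewrite E1 | rewrite E3].
have Ht3 := t3_trilin T3.
rewrite (Hc b).2 (Hc c).1 (Hc e).1 (Hc a).2 (bl0l HB) !(tri20 Ht3) !(tri30 Ht3) !addr0.
rewrite (Hlb a b c) (tri3D Ht3).
by rewrite !addrA [LHS](ACl (1*4*3*5*2*6)%AC).
Qed.

Theorem theorem5p5 (K : fieldType) (L : lmodType K)
  (br : L -> L -> L -> L) (one : L)
  (TL : tensor2 L L) (TTL : tensor2 TL TL) (T3 : tensor3 TL TL TL) :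
  central_3Leibniz br one ->
  [/\ (exists B : TL -> TL -> TL, bilin B /\
         forall x1 x2 y1 y2 : L,
           B (t2 TL x1 x2) (t2 TL y1 y2) =
           t2 TL (br x1 y1 y2) x2 + t2 TL x1 (br x2 y1 y2)),
      (forall B : TL -> TL -> TL, bilin B ->
         (forall x1 x2 y1 y2 : L,
           B (t2 TL x1 x2) (t2 TL y1 y2) =
           t2 TL (br x1 y1 y2) x2 + t2 TL x1 (br x2 y1 y2)) ->
         central_Leibniz B (t2 TL one one)),
      (exists R : TTL -> TTL, lin R /\
         forall x1 x2 y1 y2 : L,
           R (t2 TTL (t2 TL x1 x2) (t2 TL y1 y2)) =
           t2 TTL (t2 TL y1 y2) (t2 TL x1 x2)
           + t2 TTL (t2 TL one one) (t2 TL (br x1 y1 y2) x2)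
           + t2 TTL (t2 TL one one) (t2 TL x1 (br x2 y1 y2))) &
      (forall R : TTL -> TTL, lin R ->
         (forall x1 x2 y1 y2 : L,
           R (t2 TTL (t2 TL x1 x2) (t2 TL y1 y2)) =
           t2 TTL (t2 TL y1 y2) (t2 TL x1 x2)
           + t2 TTL (t2 TL one one) (t2 TL (br x1 y1 y2) x2)
           + t2 TTL (t2 TL one one) (t2 TL x1 (br x2 y1 y2))) ->
         YBE_solution T3 R)].
Proof.
move=> H3; have [Hbr _ _] := H3.
have [B [HB HBp]] := part1 TL Hbr.
split.
- by exists B.
- by move=> B' HB' HBp'; exact: part2 H3 HB' HBp'.
- exact: (@part3 _ _ br one TL TTL B HB HBp).
- move=> R HR HRp; exact: (@part4 _ _ br one TL TTL T3 B R (part2 H3 HB HBp) HBp HR HRp).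
Qed.
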